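(* Let $n,p\ge1$ be integers and let $\mathbf{A}^{p+1}_{n+1}$ be as defined in the context. The implicative filters of $\mathbf{A}^{p+1}_{n+1}$ different from $A$ are exactly the three sets $\{\top\}$, $f_\omega=\{\langle(n,r),p\rangle: r\le0\}$, and ${\uparrow}\langle(0,0),p\rangle=\{a\in A: a\ge\langle(0,0),p\rangle\}$ (and $\{\top\}\subsetneq f_\omega\subsetneq{\uparrow}\langle(0,0),p\rangle$).
   Context: Order $\mathbb{Z}\times\mathbb{Z}$ lexicographically: $(m,r)\preccurlyeq(k,s)$ iff $m<k$, or $m=k$ and $r\le s$; addition/subtraction of pairs is componentwise, and $\min,\max$ of pairs refer to $\preccurlyeq$. For an integer $n\ge1$ let $L^\omega_{n+1}=\{(m,r)\in\mathbb{Z}^2:(0,0)\preccurlyeq(m,r)\preccurlyeq(n,0)\}$ with $x\ast y=\max\{(0,0),x+y-(n,0)\}$ and $x\to y=\min\{(n,0),(n,0)-x+y\}$. For an integer $p\ge1$ let $L_{p+1}=\{0,1,\dots,p\}$ with $\alpha\ast\beta=\max\{0,\alpha+\beta-p\}$. Define $$A=A^{p+1}_{n+1}=\{\langle(m,r),\alpha\rangle:(m,r)\in L^\omega_{n+1},\ \alpha\in\{0,p\}\}\cup\{\langle(m,r),\alpha\rangle:(0,0)\preccurlyeq(m,r)\preccurlyeq(n-1,0),\ 0<\alpha<p\}.$$ Order: $\langle(m,r),\alpha\rangle\le\langle(k,s),\beta\rangle$ iff one of: (o1) $\alpha\neq0$, $\alpha\le\beta$ and $(m,r)\preccurlyeq(k,s)$;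 (o2) $\alpha=\beta=0$ and $(k,s)\preccurlyeq(m,r)$; (o3) $\alpha=0$, $\beta\ne0$ and $(n-1,0)\preccurlyeq(m+k,r+s)$. $\wedge,\vee$ denote meet and join for $\le$. Put $\bot=\langle(n,0),0\rangle$, $\top=\langle(n,0),p\rangle$. For $a=\langle(m,r),\alpha\rangle$, $b=\langle(k,s),\beta\rangle\in A$ define $a\odot b$ by: (P1) if $\alpha,\beta\ge1$ and $\alpha+\beta>p$: $a\odot b=\langle(m,r)\ast(k,s),\alpha+\beta-p\rangle$; (P2) if $\alpha,\beta\ge1$ and $\alpha+\beta\le p$: $a\odot b=\langle\min\{(n,0),(2n-(m+k+1),-(r+s))\},0\rangle$; (P3) if $\alpha\ge1$, $\beta=0$: $a\odot b=\langle(m,r)\to(k,s),0\rangle$, and if $\alpha=0$, $\beta\ge1$: $a\odot b=\langle(k,s)\to(m,r),0\rangle$; (P4) if $\alpha=\beta=0$: $a\odot b=\langle\min\{(n,0),(m+k+1,r+s)\},0\rangle$. Define $\sim\langle(m,r),\alpha\rangle=\langle(m,r),p-\alpha\rangle$ if $\alpha\in\{0,p\}$, and $\sim\langle(m,r),\alpha\rangle=\langle(n-1-m,-r),p-\alpha\rangle$ if $0<\alpha<p$. Define $a\Rightarrow b=\sim(a\odot\sim b)$. The algebra $\mathbf{A}^{p+1}_{n+1}$ is $\langle A;\odot,\Rightarrow,\wedge,\vee,\bot,\top\rangle$. An implicative filter of $\mathbf{A}^{p+1}_{n+1}$ is a subset $F\subseteq A$ with $\top\in F$, closed under $\odot$,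 and upward closed w.r.t. $\le$. *)

(* Defs.v *)
From Stdlib Require Import ZArith Bool.
Open Scope Z_scope.

Definition pair := (Z * Z)%type.

Definition lexle (x y : pair) : Prop :=
  fst x < fst y \/ (fst x = fst y /\ snd x <= snd y).

Definition lexleb (x y : pair) : bool :=
  (fst x <? fst y) || ((fst x =? fst y) && (snd x <=? snd y)).

Definition pmin (x y : pair) : pair := if lexleb x y then x else y.
Definition pmax (x y : pair) : pair := if lexleb x y then y else x.
Definition padd (x y : pair) : pair := (fst x + fst y, snd x + snd y).
Definition psub (x y : pair) : pair := (fst x - fst y, snd x - snd y).

Definition inLw (n : Z) (x : pair) : Prop := lexle (0, 0) x /\ lexle x (n, 0).
Definition starw (n : Z) (x y : pair) : pair := pmax (0, 0) (psub (padd x y) (n, 0)).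
Definition implw (n : Z) (x y : pair) : pair := pmin (n, 0) (padd (psub (n, 0) x) y).

(* Elements <(m,r), alpha> of A^{p+1}_{n+1}, encoded as (pair, alpha). *)
Definition elt := (pair * Z)%type.

Definition inA (n p : Z) (a : elt) : Prop :=
  let (x, al) := a in
  (inLw n x /\ (al = 0 \/ al = p)) \/
  (lexle (0, 0) x /\ lexle x (n - 1, 0) /\ 0 < al < p).

Definition leA (n : Z) (a b : elt) : Prop :=
  let (x, al) := a in let (y, be) := b in
  (al <> 0 /\ al <= be /\ lexle x y) \/
  (al = 0 /\ be = 0 /\ lexle y x) \/
  (al = 0 /\ be <> 0 /\ lexle (n - 1, 0) (padd x y)).

Definition botA (n : Z) : elt := ((n, 0), 0).
Definition topA (n p : Z) : elt := ((n, 0), p).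

Definition odotA (n p : Z) (a b : elt) : elt :=
  let (x, al) := a in let (y, be) := b in
  if (1 <=? al) && (1 <=? be) then
    if p <? al + be then (starw n x y, al + be - p)
    else (pmin (n, 0) (2 * n - (fst x + fst y + 1), - (snd x + snd y)), 0)
  else if (1 <=? al) then (implw n x y, 0)
  else if (1 <=? be) then (implw n y x, 0)
  else (pmin (n, 0) (fst x + fst y + 1, snd x + snd y), 0).

Definition subsetA (n p : Z) (F : elt -> Prop) : Prop :=
  forall a, F a -> inA n p a.

Definition implicative_filter (n p : Z) (F : elt -> Prop) : Prop :=
  F (topA n p) /\
  (forall a b, F a -> F b -> F (odotA n p a b)) /\
  (forall a b, F a -> inA n p b -> leA n a b -> F b).

Definition set_eq (F G : elt -> Prop) : Prop := forall a, F a <-> G a.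
Definition set_sub (F G : elt -> Prop) : Prop := forall a, F a -> G a.
Definition set_ssub (F G : elt -> Prop) : Prop := set_sub F G /\ ~ set_eq F G.

Definition top_set (n p : Z) : elt -> Prop := fun a => a = topA n p.
Definition f_omega (n p : Z) : elt -> Prop :=
  fun a => exists r, r <= 0 /\ a = ((n, r), p).
Definition up00p (n p : Z) : elt -> Prop :=
  fun a => inA n p a /\ leA n ((0, 0), p) a.

(* Main.v *)
Require Import Defs.
From Stdlib Require Import ZArith Lia Classical.
Open Scope Z_scope.

Lemma lexleb_spec a b : lexleb a b = true <-> lexle a b.
Proof.
  destruct a as [a1 a2], b as [b1 b2]; unfold lexleb, lexle; simpl.
  rewrite Bool.orb_true_iff, Bool.andb_true_iff, Z.ltb_lt, Z.eqb_eq, Z.leb_le. tauto.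
Qed.

Lemma lexle_total a b : lexle a b \/ lexle b a.
Proof. destruct a, b; unfold lexle; simpl; lia. Qed.

Lemma lexle_antisym a b : lexle a b -> lexle b a -> a = b.
Proof. destruct a, b; unfold lexle; simpl; intros; f_equal; lia. Qed.

Lemma pmax_l a b : lexle b a -> pmax a b = a.
Proof.
  unfold pmax; intros H. destruct (lexleb a b) eqn:E; auto.
  apply lexleb_spec in E. symmetry; apply lexle_antisym; auto.
Qed.

Lemma pmax_r a b : lexle a b -> pmax a b = b.
Proof. unfold pmax; intros H. apply lexleb_spec in H. now rewrite H. Qed.

Lemma pmin_l a b : lexle a b -> pmin a b = a.
Proof. unfold pmin; intros H. apply lexleb_spec in H. now rewrite H. Qed.

Lemma pmin_r a b : lexle b a -> pmin a b = b.
Proof.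
  unfold pmin; intros H. destruct (lexleb a b) eqn:E; auto.
  apply lexleb_spec in E. apply lexle_antisym; auto.
Qed.

Lemma pmax_le a b c : lexle a c -> lexle b c -> lexle (pmax a b) c.
Proof. unfold pmax; destruct (lexleb a b); auto. Qed.

Lemma pmin_ge a b c : lexle c a -> lexle c b -> lexle c (pmin a b).
Proof. unfold pmin; destruct (lexleb a b); auto. Qed.

Lemma odot_P1 n p x al y be : 1 <= al -> 1 <= be -> p < al + be ->
  odotA n p (x, al) (y, be) = (starw n x y, al + be - p).
Proof.
  intros. unfold odotA.
  rewrite (proj2 (Z.leb_le 1 al)), (proj2 (Z.leb_le 1 be)), (proj2 (Z.ltb_lt p _)); auto.
Qed.

Lemma odot_P2 n p x al y be : 1 <= al -> 1 <= be -> al + be <= p ->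
  odotA n p (x, al) (y, be) =
  (pmin (n, 0) (2 * n - (fst x + fst y + 1), - (snd x + snd y)), 0).
Proof.
  intros. unfold odotA.
  rewrite (proj2 (Z.leb_le 1 al)), (proj2 (Z.leb_le 1 be)).
  2,3: assumption. simpl. destruct (Z.ltb_spec p (al + be)). lia. reflexivity.
Qed.

Lemma odot_P4 n p x y :
  odotA n p (x, 0) (y, 0) = (pmin (n, 0) (fst x + fst y + 1, snd x + snd y), 0).
Proof. reflexivity. Qed.

Lemma le_bot n p b : 1 <= n -> inA n p b -> leA n (botA n) b.
Proof.
  destruct b as [[m r] al]. unfold inA, leA, botA, inLw, lexle, padd; simpl. intros; lia.
Qed.

Lemma bot_all n p F : 1 <= n -> subsetA n p F -> implicative_filter n p F ->
  F (botA n) -> set_eq F (inA n p).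
Proof.
  intros hn Hs [Ft [Fm Fu]] Fb a; split; [apply Hs|].
  intros Ha. eapply Fu; eauto. eapply le_bot; eauto.
Qed.

Lemma zero_to_bot n p F x : 1 <= n -> implicative_filter n p F ->
  F (x, 0) -> lexle (0,0) x -> F (botA n).
Proof.
  intros hn [Ft [Fm Fu]] Fx Hx.
  assert (F0 : F ((0,0),0)).
  { eapply Fu; [exact Fx| |].
    - unfold inA, inLw, lexle; cbn [fst snd]; lia.
    - destruct x; unfold leA, lexle in *; cbn [fst snd] in *; lia. }
  assert (Hk : forall k : nat, Z.of_nat k <= n -> F ((Z.of_nat k, 0), 0)).
  { induction k; intros Hk; [exact F0|].
    specialize (Fm _ _ (IHk ltac:(lia)) F0). rewrite odot_P4 in Fm. simpl in Fm.
    rewrite pmin_r in Fm by (unfold lexle; cbn [fst snd]; lia).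
    replace (Z.of_nat (S k)) with (Z.of_nat k + 0 + 1) by lia.
    replace 0 with (0 + 0) at 2 by lia. exact Fm. }
  specialize (Hk (Z.to_nat n) ltac:(lia)). rewrite Z2Nat.id in Hk by lia. exact Hk.
Qed.

Lemma mid_to_bot n p F x al : 1 <= n -> implicative_filter n p F ->
  F (x, al) -> 0 < al < p -> lexle x (n - 1, 0) -> F (botA n).
Proof.
  intros hn HF Fx Hal Hx. pose proof HF as [Ft [Fm Fu]].
  assert (Hc : forall k : nat, 1 <= Z.of_nat k <= p - 1 -> F ((n-1,0), Z.of_nat k) -> F (botA n)).
  { induction k; intros Hk Fk; [lia|].
    destruct (Nat.eq_dec k 0) as [->|Hk0].
    - specialize (Fm _ _ Fk Fk). simpl Z.of_nat in Fm. rewrite odot_P2 in Fm by lia.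
      eapply zero_to_bot; [exact hn|exact HF|exact Fm|].
      apply pmin_ge; unfold lexle; cbn [fst snd]; lia.
    - apply IHk; [lia|].
      assert (Fp : F ((n-1,0), p-1)).
      { eapply Fu; [exact Fk| |]; unfold inA, leA, inLw, lexle; cbn [fst snd]; lia. }
      specialize (Fm _ _ Fk Fp). rewrite odot_P1 in Fm by lia.
      eapply Fu; [exact Fm| |].
      + unfold inA, inLw, lexle; cbn [fst snd]; lia.
      + unfold leA. left. split; [lia|]. split; [lia|].
        unfold starw. apply pmax_le; unfold lexle, psub, padd; cbn [fst snd]; lia. }
  apply (Hc (Z.to_nat (p-1))); rewrite Z2Nat.id by lia; [lia|].
  eapply Fu; [exact Fx| |].
  - unfold inA, inLw, lexle; cbn [fst snd]; lia.
  - destruct x; unfold leA, lexle in *; cbn [fst snd] in *; lia.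
Qed.

Ltac ul := unfold up00p, f_omega, top_set, inA, leA, inLw, lexle, topA, botA in *; cbn [fst snd] in *.

Lemma pmax_ge_l a b : lexle a (pmax a b).
Proof.
  unfold pmax. destruct (lexleb a b) eqn:E; [now apply lexleb_spec|].
  destruct a; unfold lexle; cbn [fst snd]; lia.
Qed.

Lemma filter_ext n p F G : set_eq F G -> implicative_filter n p G -> implicative_filter n p F.
Proof.
  intros E [Gt [Gm Gu]]; split; [|split].
  - apply E; auto.
  - intros a b Fa Fb; apply E; apply Gm; apply E; auto.
  - intros a b Fa Hb Hab; apply E; apply (Gu a b); auto; apply E; auto.
Qed.

Lemma notA n p F : 1 <= p -> set_eq F (inA n p) -> ~ F (botA n).
Proof. Abort.

Lemma top_filter n p : 1 <= n -> 1 <= p -> implicative_filter n p (top_set n p).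
Proof.
  intros hn hp; split; [|split]; unfold top_set.
  - reflexivity.
  - intros a b -> ->. unfold topA. rewrite odot_P1 by lia. unfold starw.
    rewrite pmax_r; [f_equal; unfold psub, padd; cbn [fst snd]; f_equal; lia|].
    unfold psub, padd, lexle; cbn [fst snd]; lia.
  - intros a [[m r] be] -> Hb Hab. ul. f_equal; [f_equal|]; lia.
Qed.

Lemma fom_filter n p : 1 <= n -> 1 <= p -> implicative_filter n p (f_omega n p).
Proof.
  intros hn hp; split; [|split]; unfold f_omega.
  - exists 0. split; [lia|reflexivity].
  - intros a b [r [Hr ->]] [s [Hs ->]]. rewrite odot_P1 by lia. unfold starw.
    rewrite pmax_r; [exists (r+s); split; [lia|]; unfold psub, padd; cbn [fst snd]; f_equal; [f_equal|]; lia|].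
    unfold psub, padd, lexle; cbn [fst snd]; lia.
  - intros a [[m s] be] [r [Hr ->]] Hb Hab. ul. exists s. split; [lia|]. f_equal; [f_equal|]; lia.
Qed.

Lemma up_filter n p : 1 <= n -> 1 <= p -> implicative_filter n p (up00p n p).
Proof.
  intros hn hp; split; [|split].
  - ul. lia.
  - intros [x al] [y be] Ha Hb.
    assert (Hx : al = p /\ inLw n x) by (destruct x; ul; lia).
    assert (Hy : be = p /\ inLw n y) by (destruct y; ul; lia).
    destruct Hx as [-> Hx], Hy as [-> Hy].
    rewrite odot_P1 by lia.
    assert (H1 : lexle (0,0) (starw n x y)) by apply pmax_ge_l.
    assert (H2 : lexle (starw n x y) (n,0)).
    { apply pmax_le; [unfold lexle; cbn; lia|]. destruct x, y; unfold inLw, lexle, psub, padd in *; cbn [fst snd] in *; lia. }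
    destruct (starw n x y) as [m r]. ul. lia.
  - intros [[m r] al] [[k s] be] Ha Hb Hab. ul. lia.
Qed.

Lemma F_form n p F a : 1 <= n -> subsetA n p F -> implicative_filter n p F ->
  ~ F (botA n) -> F a -> exists x, a = (x, p) /\ inLw n x.
Proof.
  intros hn Hs HF Hb Fa. destruct a as [x al].
  pose proof (Hs _ Fa) as HA. cbn in HA.
  destruct HA as [[Hx [-> | ->]] | [H0 [H1 H2]]].
  - exfalso. apply Hb. eapply zero_to_bot; eauto. apply Hx.
  - eauto.
  - exfalso. apply Hb. eapply mid_to_bot; eauto.
Qed.

Lemma low_case n p F m r : 1 <= n -> 1 <= p -> implicative_filter n p F ->
  F ((m, r), p) -> lexle (0,0) (m, r) -> m < n -> F ((0,0), p).
Proof.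
  intros hn hp [Ft [Fm Fu]] Fa H0 Hm.
  set (t := Z.abs r).
  assert (F1 : F ((n-1, t), p)).
  { eapply Fu; [exact Fa| |]; unfold t; ul; lia. }
  assert (Hj : forall j : nat, (1 <= j)%nat -> Z.of_nat j <= n -> F ((n - Z.of_nat j, Z.of_nat j * t), p)).
  { induction j; intros Hj1 Hj2; [lia|].
    destruct (Nat.eq_dec j 0) as [->|Hj0].
    - replace (n - Z.of_nat 1, Z.of_nat 1 * t) with (n - 1, t) by (f_equal; lia). exact F1.
    - specialize (Fm _ _ (IHj ltac:(lia) ltac:(lia)) F1). rewrite odot_P1 in Fm by lia.
      unfold starw in Fm. rewrite pmax_r in Fm.
      + replace (p + p - p) with p in Fm by lia.
        unfold psub, padd in Fm; cbn [fst snd] in Fm.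
        replace (n - Z.of_nat (S j), Z.of_nat (S j) * t) with
          (n - Z.of_nat j + (n - 1) - n, Z.of_nat j * t + t - 0) by (f_equal; nia).
        exact Fm.
      + unfold psub, padd, lexle; cbn [fst snd]. unfold t. nia. }
  specialize (Fm _ _ (Hj (Z.to_nat n) ltac:(lia) ltac:(lia)) F1).
  rewrite odot_P1 in Fm by lia. unfold starw in Fm. rewrite pmax_l in Fm.
  - replace (p + p - p) with p in Fm by lia. exact Fm.
  - unfold psub, padd, lexle; cbn [fst snd]. lia.
Qed.

Lemma neg_case n p F r : 1 <= n -> 1 <= p -> implicative_filter n p F ->
  F ((n, r), p) -> r < 0 -> forall s, s <= 0 -> F ((n, s), p).
Proof.
  intros hn hp [Ft [Fm Fu]] Fa Hr s Hs.
  assert (Hk : forall k : nat, (1 <= k)%nat -> F ((n, Z.of_nat k * r), p)).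
  { induction k; intros Hk; [lia|].
    destruct (Nat.eq_dec k 0) as [->|Hk0].
    - replace (Z.of_nat 1 * r) with r by lia. exact Fa.
    - specialize (Fm _ _ (IHk ltac:(lia)) Fa). rewrite odot_P1 in Fm by lia.
      unfold starw in Fm. rewrite pmax_r in Fm.
      + replace (p + p - p) with p in Fm by lia.
        unfold psub, padd in Fm; cbn [fst snd] in Fm.
        replace (n, Z.of_nat (S k) * r) with (n + n - n, Z.of_nat k * r + r - 0) by (f_equal; nia).
        exact Fm.
      + unfold psub, padd, lexle; cbn [fst snd]. lia. }
  destruct (Z.eq_dec s 0) as [->|Hs0]; [exact Ft|].
  eapply Fu; [apply (Hk (Z.to_nat (-s)) ltac:(lia))| |]; ul; [lia|].
  left. split; [lia|]. split; [lia|]. right. split; [reflexivity|].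
  rewrite Z2Nat.id by lia. nia.
Qed.

Theorem lemma3p2 (n p : Z) (hn : 1 <= n) (hp : 1 <= p) :
  (forall F : elt -> Prop, subsetA n p F ->
     (implicative_filter n p F /\ ~ set_eq F (inA n p)) <->
     (set_eq F (top_set n p) \/ set_eq F (f_omega n p) \/ set_eq F (up00p n p)))
  /\ set_ssub (top_set n p) (f_omega n p)
  /\ set_ssub (f_omega n p) (up00p n p).
Proof.
  split; [|split].
  - intros F Hs. split.
    + intros [HF HnA].
      assert (Hb : ~ F (botA n)) by (intro Hb; apply HnA; eapply bot_all; eauto).
      pose proof HF as [Ft [Fm Fu]].
      destruct (classic (exists m r, F ((m, r), p) /\ m < n)) as [[m [r [Fa Hm]]]|Hlow].
      * right; right. 
        destruct (F_form n p F _ hn Hs HF Hb Fa) as [x [Ex Hx]]. injection Ex as <-.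
        assert (F0 : F ((0,0),p)) by (apply (low_case n p F m r hn hp HF Fa (proj1 Hx) Hm)).
        intros a; split.
        -- intros Fa'. split; [apply Hs; auto|].
           destruct (F_form n p F _ hn Hs HF Hb Fa') as [[k s] [-> Hy]]. ul. lia.
        -- intros [Ha Hle]. eapply Fu; eauto.
      * assert (Hall : forall a, F a -> exists r, r <= 0 /\ a = ((n, r), p)).
        { intros a Fa. destruct (F_form n p F _ hn Hs HF Hb Fa) as [[k s] [-> Hy]].
          destruct (Z.eq_dec k n) as [->|Hk].
          - exists s. split; [ul; lia|reflexivity].
          - exfalso. apply Hlow. exists k, s. split; [auto|]. ul; lia. }
        destruct (classic (exists r, F ((n, r), p) /\ r < 0)) as [[r [Fa Hr]]|Hneg].
        -- right; left. intros a; split; [apply Hall|].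
           intros [s [Hs0 ->]]. eapply neg_case; eauto.
        -- left. intros a; split.
           ++ intros Fa. destruct (Hall a Fa) as [s [Hs0 ->]].
              destruct (Z.eq_dec s 0) as [->|Hs1]; [reflexivity|].
              exfalso. apply Hneg. exists s. split; [auto|lia].
           ++ intros ->. exact Ft.
    + intros HG.
      assert (HGf : exists G, set_eq F G /\ implicative_filter n p G /\ ~ G (botA n)).
      { destruct HG as [E|[E|E]]; eexists; (split; [exact E|split]).
        - apply top_filter; auto.
        - unfold top_set, botA, topA. intro H; injection H; lia.
        - apply fom_filter; auto.
        - unfold f_omega, botA. intros [r [_ H]]; injection H; lia.
        - apply up_filter; auto.
        - unfold up00p, botA. intros [_ H]. ul. lia. }
      destruct HGf as [G [E [HGF Hb]]]. split.
      * eapply filter_ext; eauto.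
      * intros EA. apply Hb. apply E. apply EA. ul. lia.
  - split.
    + intros a ->. exists 0. split; [lia|reflexivity].
    + intros E. assert (H : top_set n p ((n, -1), p)) by (apply E; exists (-1); split; [lia|reflexivity]).
      unfold top_set, topA in H. injection H; lia.
  - split.
    + intros a [r [Hr ->]]. ul. lia.
    + intros E. assert (H : f_omega n p ((0, 0), p)) by (apply E; ul; lia).
      destruct H as [r [_ H]]. injection H; lia.
Qed.
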